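(* Let $\tilde F:E^c\to E^c$ be $\Gamma$-equivariant, and let $f$ and $h$ denote its $z_1$- and $w_1$-components, respectively (so $\tilde F=[f,h]$). Then $R_\phi\tilde F(\Phi)=\tilde F(R_\phi\Phi)$ for all $\Phi\in E^c\cap R_{-\phi}E^c=\{(z_1,z_2,0,w_2,w_3,0)\}$ if and only if $$f(z_1,z_2,0,w_2,w_3,0)=h(w_2,w_3,z_1,0,0,\bar z_2)\quad\text{for all }z_1,z_2,w_2,w_3\in\mathbb C,$$ equivalently $h(z_1,z_2,w_1,0,0,w_4)=f(w_1,\bar w_4,0,z_1,z_2,0)$ for all $z_1,z_2,w_1,w_4$.
   Context: $[4,8]$ mode interaction: integers $l_1>l_2>n_2>0$ with $l_1^2=l_2^2+n_2^2$. Wave vectors $q_1=(l_1,0)$, $q_2=(0,l_1)$, $p_1=(l_2,n_2)$, $p_2=(l_2,-n_2)$, $p_3=(n_2,l_2)$, $p_4=(n_2,-l_2)$; $\tilde A=\{\pm q_i,\pm p_j\}$. $E^c$ is the real space of functions $a$ supported in $\tilde A$ with $a(-k)=\overline{a(k)}$, with coordinates $(z_1,z_2,w_1,\dots,w_4)$, $z_i=a(q_i)$, $w_j=a(p_j)$. Group actions on functions: $(\gamma a)(k)=a(\gamma^{-1}k)$ for $\gamma\in O(2)$, $(T_{s,t}a)(k)=e^{-i(sk_x+tk_y)}a(k)$; $R_\theta$ = counterclockwise rotation by $\theta$; $\phi=\arctan(n_2/l_2)$ (so $R_\phi q_1=p_1$). $\Gamma=D_4\dot+T^2$ is generated by $\gamma_1(x,y)=(-x,y)$,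 $\gamma_2(x,y)=(y,x)$ and translations with $(s,t)\in(\mathbb R/2\pi\mathbb Z)^2$. *)

(* Defs.v *)
From Stdlib Require Import Reals List.
Import ListNotations.
From Coquelicot Require Import Coquelicot.
Open Scope R_scope.

Record coord6 := mk6 { cz1 : C; cz2 : C; cw1 : C; cw2 : C; cw3 : C; cw4 : C }.

Definition pt := (R * R)%type.
Definition pneg (p : pt) : pt := (- fst p, - snd p).

Definition pt_eqb (k p : pt) : bool :=
  if Req_EM_T (fst k) (fst p) then
    if Req_EM_T (snd k) (snd p) then true else false
  else false.

Section Waves.
Variables l1 l2 n2 : nat.
Definition q1 : pt := (INR l1, 0).
Definition q2 : pt := (0, INR l1).
Definition p1 : pt := (INR l2, INR n2).
Definition p2 : pt := (INR l2, - INR n2).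
Definition p3 : pt := (INR n2, INR l2).
Definition p4 : pt := (INR n2, - INR l2).

(* The function on R^2 (wave-vector space) with support in A~ and
   a(-k) = conj (a k) whose coordinates are v. *)
Definition embed (v : coord6) : pt -> C := fun k =>
  if pt_eqb k q1 then cz1 v else if pt_eqb k (pneg q1) then Cconj (cz1 v) else
  if pt_eqb k q2 then cz2 v else if pt_eqb k (pneg q2) then Cconj (cz2 v) else
  if pt_eqb k p1 then cw1 v else if pt_eqb k (pneg p1) then Cconj (cw1 v) else
  if pt_eqb k p2 then cw2 v else if pt_eqb k (pneg p2) then Cconj (cw2 v) else
  if pt_eqb k p3 then cw3 v else if pt_eqb k (pneg p3) then Cconj (cw3 v) else
  if pt_eqb k p4 then cw4 v else if pt_eqb k (pneg p4) then Cconj (cw4 v) else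
  0%C.
End Waves.

(* 2x2 real matrices (a,b,c,d) = [[a,b],[c,d]] *)
Definition mat := (R * R * R * R)%type.
Definition mapply (m : mat) (k : pt) : pt :=
  let '(a, b, c, d) := m in (a * fst k + b * snd k, c * fst k + d * snd k).
Definition mtrans (m : mat) : mat := let '(a, b, c, d) := m in (a, c, b, d).

(* Action of an orthogonal matrix gamma on functions: (gamma a)(k) = a(gamma^{-1} k),
   with gamma^{-1} = gamma^T (only used for orthogonal matrices). *)
Definition orth_act (m : mat) (a : pt -> C) : pt -> C :=
  fun k => a (mapply (mtrans m) k).

Definition Cexpi (th : R) : C := (cos th, sin th).
Definition trans_act (s t : R) (a : pt -> C) : pt -> C :=
  fun k => (Cexpi (- (s * fst k + t * snd k)) * a k)%C.

Definition rotm (th : R) : mat := (cos th, - sin th, sin th, cos th).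

(* D4 = group generated by gamma1 (x,y) -> (-x,y) and gamma2 (x,y) -> (y,x):
   all eight signed permutation matrices. *)
Definition D4 : list mat :=
  [ (1,0,0,1); (-1,0,0,1); (1,0,0,-1); (-1,0,0,-1);
    (0,1,1,0); (0,-1,1,0); (0,1,-1,0); (0,-1,-1,0) ]%R.

Definition Gamma_equivariant (l1 l2 n2 : nat) (F : coord6 -> coord6) : Prop :=
  (forall m, In m D4 -> forall v v' : coord6,
     embed l1 l2 n2 v' = orth_act m (embed l1 l2 n2 v) ->
     embed l1 l2 n2 (F v') = orth_act m (embed l1 l2 n2 (F v))) /\
  (forall s t : R, forall v v' : coord6,
     embed l1 l2 n2 v' = trans_act s t (embed l1 l2 n2 v) ->
     embed l1 l2 n2 (F v') = trans_act s t (embed l1 l2 n2 (F v))).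

Definition phi_angle (l2 n2 : nat) : R := atan (INR n2 / INR l2).

(* Main.v *)
Require Import Defs.
From Stdlib Require Import Reals List Lra Lia ZArith Znumtheory FunctionalExtensionality.
From Coquelicot Require Import Coquelicot.
Open Scope R_scope.
Local Open Scope Z_scope.
Lemma NTZ (A B D : Z) : (0 < D -> D < B -> B < A -> A*A = B*B + D*D ->
  exists g L l n, 0 < g /\ A = g*L /\ B = g*l /\ D = g*n /\ L*L = l*l+n*n /\
    0 < n /\ n < l /\ l < L /\ ~ (L | 2*l*n) /\ A <> 2*D)%Z.
Proof.
  intros HD HDB HBA HP.
  set (g := Z.gcd (Z.gcd A B) D).
  assert (gA : (g | A)) by (apply (Z.divide_trans _ (Z.gcd A B)); [apply Z.gcd_divide_l|apply Z.gcd_divide_l]).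
  assert (gB : (g | B)) by (apply (Z.divide_trans _ (Z.gcd A B)); [apply Z.gcd_divide_l|apply Z.gcd_divide_r]).
  assert (gD : (g | D)) by apply Z.gcd_divide_r.
  assert (g0 : 0 <= g) by apply Z.gcd_nonneg.
  destruct gA as [L HL]. destruct gB as [l Hl]. destruct gD as [n Hn].
  assert (gp : 0 < g) by (destruct (Z.eq_dec g 0); [rewrite e in Hn; lia| lia]).
  assert (HP' : L*L = l*l+n*n).
  { apply (Z.mul_cancel_l _ _ (g*g)); [nia|]. rewrite HL, Hl, Hn in HP; nia. }
  assert (Hg1 : Z.gcd (Z.gcd L l) n = 1).
  { assert (E : g = g * Z.gcd (Z.gcd L l) n).
    { unfold g at 1. rewrite HL, Hl, Hn. idtac. 
      rewrite (Z.mul_comm L g), (Z.mul_comm l g), (Z.mul_comm n g).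
      rewrite (Z.gcd_mul_mono_l L l g), Z.abs_eq by lia. rewrite (Z.gcd_mul_mono_l (Z.gcd L l) n g).
      rewrite Z.abs_eq by lia. ring. }
    nia. }
  assert (cop : forall x y, Z.gcd (Z.gcd L x) y = 1 -> L*L = x*x + y*y -> Z.gcd L x = 1).
  { intros x y Hxy Hsq. set (e := Z.gcd L x).
    assert (ed : (e | y*y)).
    { replace (y*y) with (L*L - x*x) by lia. apply Z.divide_sub_r.
      apply Z.divide_mul_l, Z.gcd_divide_l. apply Z.divide_mul_l, Z.gcd_divide_r. }
    assert (rp : rel_prime e (y*y)).
    { apply rel_prime_mult; apply Zgcd_1_rel_prime; exact Hxy. }
    apply Zgcd_1_rel_prime in rp. apply Z.divide_gcd_iff in ed; [|apply Z.gcd_nonneg].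
    rewrite <- ed. exact rp. }
  assert (c1 : Z.gcd L l = 1) by (apply (cop l n); auto).
  assert (c2 : Z.gcd L n = 1).
  { apply (cop n l); [|lia]. rewrite <- Z.gcd_assoc, (Z.gcd_comm n l), Z.gcd_assoc. exact Hg1. }
  assert (n0 : 0 < n) by nia. assert (nl : n < l) by nia. assert (lL : l < L) by nia.
  exists g, L, l, n. repeat split; try assumption; try nia.
  - intro Hd. assert (H2 : (L | n*2)).
    { apply (Z.gauss _ l); [|exact c1]. replace (l*(n*2)) with (2*l*n) by ring. exact Hd. }
    apply (Z.gauss _ n) in H2; [|exact c2].
    apply Z.divide_pos_le in H2; [|lia]. nia.
  - intro E. assert (EL : L = 2*n) by nia.
    assert (nd : (n | L)) by (exists 2; lia).
    apply Z.divide_gcd_iff in nd; [|lia]. rewrite Z.gcd_comm, c2 in nd. subst n. nia.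
Qed.
Local Open Scope R_scope.
Lemma Cexpi_fix th w : (Cexpi th * w)%C = w -> cos th <> 1 -> w = 0%C.
Proof.
  destruct w as [x y]. unfold Cexpi. intros H Hc.
  assert (H1 : cos th * x - sin th * y = x) by (apply (f_equal fst) in H; simpl in H; lra).
  assert (H2 : cos th * y + sin th * x = y) by (apply (f_equal snd) in H; simpl in H; lra).
  pose proof (sin2_cos2 th) as Hs. unfold Rsqr in Hs.
  assert (Hc1 : cos th - 1 <> 0) by lra.
  assert (E1 : (2 - 2 * cos th) * x = 0) by nra.
  assert (E2 : (2 - 2 * cos th) * y = 0) by nra.
  apply Rmult_integral in E1; apply Rmult_integral in E2.
  destruct E1 as [E1|E1]; [lra|]. destruct E2 as [E2|E2]; [lra|]. subst. reflexivity.
Qed.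
Lemma Cexpi_nat m : Cexpi (- (2 * PI * INR m)) = 1%C.
Proof.
  unfold Cexpi. rewrite cos_neg, sin_neg.
  replace (2 * PI * INR m) with (0 + 2 * INR m * PI) by ring.
  rewrite cos_period, sin_period, cos_0, sin_0. apply injective_projections; simpl; lra.
Qed.
Lemma Cexpi_natn m : Cexpi (- - (2 * PI * INR m)) = 1%C.
Proof.
  unfold Cexpi. rewrite Ropp_involutive.
  replace (2 * PI * INR m) with (0 + 2 * INR m * PI) by ring.
  rewrite cos_period, sin_period, cos_0, sin_0. apply injective_projections; simpl; lra.
Qed.
Lemma cos_not1 (L l n : nat) : (0 < L)%nat -> ~ (Z.of_nat L | 2 * Z.of_nat l * Z.of_nat n)%Z ->
  cos (- (2 * PI * (2 * INR l * INR n / INR L))) <> 1.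
Proof.
  intros HL Hd Hc. set (r := 2 * INR l * INR n / INR L) in *.
  replace (- (2 * PI * r)) with (2 * (- (PI * r))) in Hc by ring.
  rewrite cos_2a_sin in Hc.
  assert (Hs : sin (- (PI * r)) = 0) by (unfold Rsqr in Hc; nra).
  apply sin_eq_0_0 in Hs. destruct Hs as [k Hk].
  assert (LP : 0 < INR L) by (apply lt_0_INR; lia).
  assert (Hr : r = - IZR k).
  { apply (Rmult_eq_reg_l PI); [|pose proof PI_RGT_0; lra]. lra. }
  apply Hd. exists (- k)%Z. apply eq_IZR.
  rewrite !mult_IZR, opp_IZR, <- !INR_IZR_INZ.
  unfold r in Hr. rewrite <- Hr. field. lra.
Qed.
Ltac prune := exfalso; first [ lra | match goal with H : ?u <> ?w |- _ => apply H; lra end ].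
Ltac dec_all := repeat (match goal with |- context [Req_EM_T ?u ?w] => destruct (Req_EM_T u w) end; try prune).
Lemma pt_eqb_refl k : pt_eqb k k = true.
Proof. unfold pt_eqb. destruct (Req_EM_T _ _); [|congruence]. destruct (Req_EM_T _ _); congruence. Qed.
Lemma pt_eqb_true k p : pt_eqb k p = true -> k = p.
Proof. destruct k, p; unfold pt_eqb; simpl.
  destruct (Req_EM_T _ _); [|congruence]. destruct (Req_EM_T _ _); [|congruence]. intros; subst; auto. Qed.

Section S.
Variables l1 l2 n2 : nat.
Hypothesis Ha : INR n2 < INR l2.
Hypothesis Hb : INR l2 < INR l1.
Hypothesis Hd : 0 < INR n2.
Hypothesis Hpy : INR l1 * INR l1 = INR l2 * INR l2 + INR n2 * INR n2.
Hypothesis Hirr : INR l1 <> 2 * INR n2.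

Lemma cos_phi : cos (phi_angle l2 n2) = INR l2 / INR l1.
Proof.
  unfold phi_angle. rewrite cos_atan.
  replace (1 + (INR n2 / INR l2)²) with ((INR l1 / INR l2)²).
  2:{ unfold Rsqr. field_simplify_eq; [nra|lra]. }
  rewrite sqrt_Rsqr. field; split; lra. apply Rlt_le, Rdiv_lt_0_compat; lra.
Qed.
Lemma sin_phi : sin (phi_angle l2 n2) = INR n2 / INR l1.
Proof.
  unfold phi_angle. rewrite sin_atan.
  replace (1 + (INR n2 / INR l2)²) with ((INR l1 / INR l2)²).
  2:{ unfold Rsqr. field_simplify_eq; [nra|lra]. }
  rewrite sqrt_Rsqr. field; split; lra. apply Rlt_le, Rdiv_lt_0_compat; lra.
Qed.

Definition Xo := (INR l2 * INR l2 - INR n2 * INR n2) / INR l1.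
Definition Yo := 2 * INR l2 * INR n2 / INR l1.
Definition RT k := mapply (mtrans (rotm (phi_angle l2 n2))) k.
Definition RR k := mapply (rotm (phi_angle l2 n2)) k.

Ltac rot := unfold RT, RR, Xo, Yo, mapply, mtrans, rotm, q1, q2, p1, p2, p3, p4, pneg;
  rewrite cos_phi, sin_phi; cbn [fst snd]; f_equal; field_simplify_eq; try lra; try nra.

Lemma RT_q1 : RT (q1 l1) = p2 l2 n2. Proof. rot. Qed.
Lemma RT_nq1 : RT (pneg (q1 l1)) = pneg (p2 l2 n2). Proof. rot. Qed.
Lemma RT_q2 : RT (q2 l1) = p3 l2 n2. Proof. rot. Qed.
Lemma RT_nq2 : RT (pneg (q2 l1)) = pneg (p3 l2 n2). Proof. rot. Qed.
Lemma RT_p1 : RT (p1 l2 n2) = q1 l1. Proof. rot. Qed.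
Lemma RT_np1 : RT (pneg (p1 l2 n2)) = pneg (q1 l1). Proof. rot. Qed.
Lemma RT_p2 : RT (p2 l2 n2) = (Xo, - Yo). Proof. rot. Qed.
Lemma RT_np2 : RT (pneg (p2 l2 n2)) = (- Xo, Yo). Proof. rot. Qed.
Lemma RT_p3 : RT (p3 l2 n2) = (Yo, Xo). Proof. rot. Qed.
Lemma RT_np3 : RT (pneg (p3 l2 n2)) = (- Yo, - Xo). Proof. rot. Qed.
Lemma RT_p4 : RT (p4 l2 n2) = pneg (q2 l1). Proof. rot. Qed.
Lemma RT_np4 : RT (pneg (p4 l2 n2)) = q2 l1. Proof. rot. Qed.
Lemma RR_q1 : RR (q1 l1) = p1 l2 n2. Proof. rot. Qed.
Lemma RR_nq1 : RR (pneg (q1 l1)) = pneg (p1 l2 n2). Proof. rot. Qed.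
Lemma RR_q2 : RR (q2 l1) = pneg (p4 l2 n2). Proof. rot. Qed.
Lemma RR_nq2 : RR (pneg (q2 l1)) = p4 l2 n2. Proof. rot. Qed.
Lemma RR_p2 : RR (p2 l2 n2) = q1 l1. Proof. rot. Qed.
Lemma RR_np2 : RR (pneg (p2 l2 n2)) = pneg (q1 l1). Proof. rot. Qed.
Lemma RR_p3 : RR (p3 l2 n2) = q2 l1. Proof. rot. Qed.
Lemma RR_np3 : RR (pneg (p3 l2 n2)) = pneg (q2 l1). Proof. rot. Qed.
Lemma RR_p1 : RR (p1 l2 n2) = (Xo, Yo). Proof. rot. Qed.
Lemma RR_p4 : RR (p4 l2 n2) = (Yo, - Xo). Proof. rot. Qed.
Ltac orth := let x := fresh "x" in let y := fresh "y" in intros [x y];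
  assert (Hcs : cos (phi_angle l2 n2) * cos (phi_angle l2 n2) + sin (phi_angle l2 n2) * sin (phi_angle l2 n2) = 1)
    by (pose proof (sin2_cos2 (phi_angle l2 n2)); unfold Rsqr in *; lra);
  unfold RT, RR, mapply, mtrans, rotm; cbn [fst snd]; f_equal;
  [transitivity ((cos (phi_angle l2 n2) * cos (phi_angle l2 n2) + sin (phi_angle l2 n2) * sin (phi_angle l2 n2))*x)
  |transitivity ((cos (phi_angle l2 n2) * cos (phi_angle l2 n2) + sin (phi_angle l2 n2) * sin (phi_angle l2 n2))*y)];
  try ring; rewrite Hcs; ring.
Lemma RR_RT : forall k, RR (RT k) = k.
Proof. orth. Qed.
Lemma RT_RR : forall k, RT (RR k) = k.
Proof. orth. Qed.
Lemma Xo_pos : 0 < Xo.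
Proof. unfold Xo. apply Rdiv_lt_0_compat; nra. Qed.
Lemma Yo_pos : 0 < Yo.
Proof. unfold Yo. apply Rdiv_lt_0_compat; nra. Qed.
Lemma Yo_d : Yo <> INR n2.
Proof. unfold Yo. intro E. assert (E' : 2 * INR l2 * INR n2 = (2 * INR l2 * INR n2 / INR l1) * INR l1) by (field; lra).
  rewrite E in E'. nra. Qed.
Lemma Yo_b : Yo <> INR l2.
Proof. unfold Yo. intro E. assert (E' : 2 * INR l2 * INR n2 = (2 * INR l2 * INR n2 / INR l1) * INR l1) by (field; lra).
  rewrite E in E'. apply Hirr. nra. Qed.

Ltac prune2 := exfalso; first [ lra | apply Yo_d; lra | apply Yo_b; lra ].
Ltac dec_all2 := repeat (match goal with |- context [Req_EM_T ?u ?w] => destruct (Req_EM_T u w) end; try prune2).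

Lemma E_outA u x y : (x = Xo \/ x = - Xo) -> (y = Yo \/ y = - Yo) -> embed l1 l2 n2 u (x, y) = 0%C.
Proof.
  pose proof Xo_pos; pose proof Yo_pos.
  intros Hx Hy. unfold embed, pt_eqb, q1, q2, p1, p2, p3, p4, pneg; cbn [fst snd].
  destruct Hx as [-> | ->]; destruct Hy as [-> | ->]; dec_all2; reflexivity.
Qed.
Lemma E_outB u x y : (x = Yo \/ x = - Yo) -> (y = Xo \/ y = - Xo) -> embed l1 l2 n2 u (x, y) = 0%C.
Proof.
  pose proof Xo_pos; pose proof Yo_pos.
  intros Hx Hy. unfold embed, pt_eqb, q1, q2, p1, p2, p3, p4, pneg; cbn [fst snd].
  destruct Hx as [-> | ->]; destruct Hy as [-> | ->]; dec_all2; reflexivity.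
Qed.
Ltac evE := unfold embed, pt_eqb, q1, q2, p1, p2, p3, p4, pneg; cbn [fst snd]; dec_all; try reflexivity.
Lemma E_q1 u : embed l1 l2 n2 u (q1 l1) = cz1 u. Proof. evE. Qed.
Lemma E_nq1 u : embed l1 l2 n2 u (pneg (q1 l1)) = Cconj (cz1 u). Proof. evE. Qed.
Lemma E_q2 u : embed l1 l2 n2 u (q2 l1) = cz2 u. Proof. evE. Qed.
Lemma E_nq2 u : embed l1 l2 n2 u (pneg (q2 l1)) = Cconj (cz2 u). Proof. evE. Qed.
Lemma E_p1 u : embed l1 l2 n2 u (p1 l2 n2) = cw1 u. Proof. evE. Qed.
Lemma E_np1 u : embed l1 l2 n2 u (pneg (p1 l2 n2)) = Cconj (cw1 u). Proof. evE. Qed.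
Lemma E_p2 u : embed l1 l2 n2 u (p2 l2 n2) = cw2 u. Proof. evE. Qed.
Lemma E_np2 u : embed l1 l2 n2 u (pneg (p2 l2 n2)) = Cconj (cw2 u). Proof. evE. Qed.
Lemma E_p3 u : embed l1 l2 n2 u (p3 l2 n2) = cw3 u. Proof. evE. Qed.
Lemma E_np3 u : embed l1 l2 n2 u (pneg (p3 l2 n2)) = Cconj (cw3 u). Proof. evE. Qed.
Lemma E_p4 u : embed l1 l2 n2 u (p4 l2 n2) = cw4 u. Proof. evE. Qed.
Lemma E_np4 u : embed l1 l2 n2 u (pneg (p4 l2 n2)) = Cconj (cw4 u). Proof. evE. Qed.

Definition Out k := pt_eqb k (q1 l1) = false /\ pt_eqb k (pneg (q1 l1)) = false /\
  pt_eqb k (q2 l1) = false /\ pt_eqb k (pneg (q2 l1)) = false /\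
  pt_eqb k (p1 l2 n2) = false /\ pt_eqb k (pneg (p1 l2 n2)) = false /\
  pt_eqb k (p2 l2 n2) = false /\ pt_eqb k (pneg (p2 l2 n2)) = false /\
  pt_eqb k (p3 l2 n2) = false /\ pt_eqb k (pneg (p3 l2 n2)) = false /\
  pt_eqb k (p4 l2 n2) = false /\ pt_eqb k (pneg (p4 l2 n2)) = false.

Lemma classify k : k = q1 l1 \/ k = pneg (q1 l1) \/ k = q2 l1 \/ k = pneg (q2 l1) \/
  k = p1 l2 n2 \/ k = pneg (p1 l2 n2) \/ k = p2 l2 n2 \/ k = pneg (p2 l2 n2) \/
  k = p3 l2 n2 \/ k = pneg (p3 l2 n2) \/ k = p4 l2 n2 \/ k = pneg (p4 l2 n2) \/ Out k.
Proof.
  unfold Out.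
  repeat match goal with |- k = ?P \/ _ =>
    let E := fresh in destruct (pt_eqb k P) eqn:E; [left; apply pt_eqb_true; exact E | right] end.
  repeat split; assumption.
Qed.

Lemma E_out u k : Out k -> embed l1 l2 n2 u k = 0%C.
Proof.
  intros (H1&H2&H3&H4&H5&H6&H7&H8&H9&H10&H11&H12). unfold embed.
  rewrite H1,H2,H3,H4,H5,H6,H7,H8,H9,H10,H11,H12. reflexivity.
Qed.

Lemma Cconj0 : Cconj 0%C = 0%C.
Proof. apply injective_projections; simpl; ring. Qed.

Lemma G1 u u' : cw1 u = 0%C -> cw4 u = 0%C -> cw2 u' = 0%C -> cw3 u' = 0%C ->
  cz1 u' = cw2 u -> cz2 u' = cw3 u -> cw1 u' = cz1 u -> cw4 u' = Cconj (cz2 u) ->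
  embed l1 l2 n2 u' = orth_act (rotm (phi_angle l2 n2)) (embed l1 l2 n2 u).
Proof.
  intros h1 h2 h3 h4 h5 h6 h7 h8.
  apply functional_extensionality; intro k. unfold orth_act. fold (RT k).
  destruct (classify k) as [->|[->|[->|[->|[->|[->|[->|[->|[->|[->|[->|[->|Hout]]]]]]]]]]]].
  - rewrite E_q1, RT_q1, E_p2; auto.
  - rewrite E_nq1, RT_nq1, E_np2, h5; auto.
  - rewrite E_q2, RT_q2, E_p3; auto.
  - rewrite E_nq2, RT_nq2, E_np3, h6; auto.
  - rewrite E_p1, RT_p1, E_q1; auto.
  - rewrite E_np1, RT_np1, E_nq1, h7; auto.
  - rewrite E_p2, RT_p2, E_outA; auto.
  - rewrite E_np2, RT_np2, E_outA, h3, Cconj0; auto.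
  - rewrite E_p3, RT_p3, E_outB; auto.
  - rewrite E_np3, RT_np3, E_outB, h4, Cconj0; auto.
  - rewrite E_p4, RT_p4, E_nq2; auto.
  - rewrite E_np4, RT_np4, E_q2, h8, Cconj_conj; auto.
  - rewrite (E_out u' k Hout). assert (Hk := RR_RT k).
    destruct (classify (RT k)) as [E|[E|[E|[E|[E|[E|[E|[E|[E|[E|[E|[E|Hout2]]]]]]]]]]]];
    try (rewrite E; first [rewrite E_p1, h1; reflexivity | rewrite E_np1, h1, Cconj0; reflexivity
            | rewrite E_p4, h2; reflexivity | rewrite E_np4, h2, Cconj0; reflexivity]);
    try (rewrite E in Hk;
      first [rewrite RR_q1 in Hk | rewrite RR_nq1 in Hk | rewrite RR_q2 in Hk | rewrite RR_nq2 in Hk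
            | rewrite RR_p2 in Hk | rewrite RR_np2 in Hk | rewrite RR_p3 in Hk | rewrite RR_np3 in Hk];
      rewrite <- Hk in Hout; unfold Out in Hout; rewrite pt_eqb_refl in Hout; intuition discriminate).
    rewrite E_out; auto.
Qed.

Lemma G2 u u' : embed l1 l2 n2 u' = orth_act (rotm (phi_angle l2 n2)) (embed l1 l2 n2 u) ->
  cw1 u = 0%C /\ cw4 u = 0%C /\ u' = mk6 (cw2 u) (cw3 u) (cz1 u) 0%C 0%C (Cconj (cz2 u)).
Proof.
  intro H.
  assert (e : forall k, embed l1 l2 n2 u' k = embed l1 l2 n2 u (RT k)) by (intro k; exact (f_equal (fun f => f k) H)).
  pose proof (e (RR (p1 l2 n2))) as a1. rewrite RT_RR, E_p1, RR_p1, E_outA in a1; auto.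
  pose proof (e (RR (p4 l2 n2))) as a4. rewrite RT_RR, E_p4, RR_p4, E_outB in a4; auto.
  split; [auto|]. split; [auto|].
  pose proof (e (q1 l1)) as b1. rewrite E_q1, RT_q1, E_p2 in b1.
  pose proof (e (q2 l1)) as b2. rewrite E_q2, RT_q2, E_p3 in b2.
  pose proof (e (p1 l2 n2)) as b3. rewrite E_p1, RT_p1, E_q1 in b3.
  pose proof (e (p2 l2 n2)) as b4. rewrite E_p2, RT_p2, E_outA in b4; auto.
  pose proof (e (p3 l2 n2)) as b5. rewrite E_p3, RT_p3, E_outB in b5; auto.
  pose proof (e (p4 l2 n2)) as b6. rewrite E_p4, RT_p4, E_nq2 in b6.
  destruct u'; cbn in *; subst; reflexivity.
Qed.
Definition actG u := mk6 (cz1 u) (Cconj (cz2 u)) (cw2 u) (cw1 u) (cw4 u) (cw3 u).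
Definition actT u := mk6 (cz2 u) (cz1 u) (cw3 u) (Cconj (cw4 u)) (cw1 u) (Cconj (cw2 u)).
Definition actP u := mk6 (Cconj (cz2 u)) (cz1 u) (cw4 u) (Cconj (cw3 u)) (cw2 u) (Cconj (cw1 u)).
Definition actN u := mk6 (Cconj (cz1 u)) (Cconj (cz2 u)) (Cconj (cw1 u)) (Cconj (cw2 u)) (Cconj (cw3 u)) (Cconj (cw4 u)).

Ltac evalR := unfold embed, pt_eqb, q1, q2, p1, p2, p3, p4, pneg; cbn [fst snd]; dec_all.
Ltac lhsE := first [rewrite E_q1 | rewrite E_nq1 | rewrite E_q2 | rewrite E_nq2 | rewrite E_p1 | rewrite E_np1
  | rewrite E_p2 | rewrite E_np2 | rewrite E_p3 | rewrite E_np3 | rewrite E_p4 | rewrite E_np4].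
Ltac leaf := unfold actG, actT, actP, actN; cbn [cz1 cz2 cw1 cw2 cw3 cw4]; rewrite ?Cconj_conj, ?Cconj0; reflexivity.
Ltac D4tac m :=
  let k := fresh "k" in let Hout := fresh "Hout" in let Hk := fresh "Hk" in let E := fresh "E" in let Hout2 := fresh "Hout2" in
  apply functional_extensionality; intro k; unfold orth_act;
  destruct (classify k) as [->|[->|[->|[->|[->|[->|[->|[->|[->|[->|[->|[->|Hout]]]]]]]]]]]];
  [ .. | rewrite E_out by exact Hout;
    assert (Hk : mapply m (mapply (mtrans m) k) = k) by (destruct k; unfold mapply, mtrans; cbn [fst snd]; f_equal; ring);
    destruct (classify (mapply (mtrans m) k)) as [E|[E|[E|[E|[E|[E|[E|[E|[E|[E|[E|[E|Hout2]]]]]]]]]]]];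
    [ .. | rewrite E_out by exact Hout2; reflexivity ];
    rewrite E in Hk; rewrite <- Hk in Hout; exfalso; unfold Out in Hout; decompose [and] Hout;
    match goal with H : pt_eqb ?a ?b = false |- _ =>
      assert (pt_eqb a b = true) by (unfold mapply, pt_eqb, q1, q2, p1, p2, p3, p4, pneg; cbn [fst snd]; dec_all; reflexivity);
      congruence end ];
  lhsE; unfold mapply, mtrans; evalR; leaf.

Lemma E_actG u : embed l1 l2 n2 (actG u) = orth_act (1,0,0,-1)%R (embed l1 l2 n2 u).
Proof. D4tac (1,0,0,-1)%R. Qed.
Lemma E_actT u : embed l1 l2 n2 (actT u) = orth_act (0,1,1,0)%R (embed l1 l2 n2 u).
Proof. D4tac (0,1,1,0)%R. Qed.
Lemma E_actP u : embed l1 l2 n2 (actP u) = orth_act (0,-1,1,0)%R (embed l1 l2 n2 u).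
Proof. D4tac (0,-1,1,0)%R. Qed.
Lemma E_actN u : embed l1 l2 n2 (actN u) = orth_act (-1,0,0,-1)%R (embed l1 l2 n2 u).
Proof. D4tac (-1,0,0,-1)%R. Qed.

Section Tr.
Variables (g L l n : nat).
Hypothesis Hg : (0 < g)%nat.
Hypothesis e1 : l1 = (g*L)%nat.
Hypothesis e2 : l2 = (g*l)%nat.
Hypothesis e3 : n2 = (g*n)%nat.
Hypothesis HP : (L*L = l*l+n*n)%nat.

Definition ts := 2 * PI * INR n / INR l1.
Definition tt := 2 * PI * INR l / INR l1.

Lemma realfacts : INR l1 = INR g * INR L /\ INR l2 = INR g * INR l /\ INR n2 = INR g * INR n /\
  INR L * INR L = INR l * INR l + INR n * INR n /\ 0 < INR g /\ 0 < INR L.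
Proof.
  subst. rewrite !mult_INR. repeat split; try reflexivity.
  - rewrite <- !mult_INR, <- plus_INR. now rewrite HP.
  - apply lt_0_INR; lia.
  - apply lt_0_INR. destruct L; [|lia]. simpl in Hb. rewrite Nat.mul_0_r in Hb. simpl in Hb. lra.
Qed.

Ltac phsolve := destruct realfacts as (r1&r2&r3&r4&r5&r6);
    unfold ts, tt, q1, q2, p1, p2, p3, p4, pneg; cbn [fst snd]; rewrite ?r1, ?r2, ?r3;
    rewrite ?INR_0; field_simplify_eq; [first [ring | rewrite <- !Rsqr_pow2; unfold Rsqr; rewrite r4; ring] | split; lra].
Ltac phase m :=
  match goal with |- context [Cexpi ?th] =>
    first [ replace th with (- (2 * PI * INR m)) by phsolve; rewrite Cexpi_nat, Cmult_1_l; reflexivity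
          | replace th with (- - (2 * PI * INR m)) by phsolve; rewrite Cexpi_natn, Cmult_1_l; reflexivity ]
  end.

Lemma trans_fix u : cw1 u = 0%C -> cw4 u = 0%C ->
  trans_act ts tt (embed l1 l2 n2 u) = embed l1 l2 n2 u.
Proof.
  intros h1 h4. apply functional_extensionality; intro k. unfold trans_act.
  destruct (classify k) as [->|[->|[->|[->|[->|[->|[->|[->|[->|[->|[->|[->|Hout]]]]]]]]]]]].
  - rewrite E_q1. phase n.
  - rewrite E_nq1. phase n.
  - rewrite E_q2. phase l.
  - rewrite E_nq2. phase l.
  - rewrite E_p1, h1, Cmult_0_r; reflexivity.
  - rewrite E_np1, h1, Cconj0, Cmult_0_r; reflexivity.
  - rewrite E_p2. phase 0%nat.
  - rewrite E_np2. phase 0%nat.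
  - rewrite E_p3. phase L.
  - rewrite E_np3. phase L.
  - rewrite E_p4, h4, Cmult_0_r; reflexivity.
  - rewrite E_np4, h4, Cconj0, Cmult_0_r; reflexivity.
  - rewrite E_out, Cmult_0_r by exact Hout; reflexivity.
Qed.

Lemma coord_eq u u' : embed l1 l2 n2 u = embed l1 l2 n2 u' -> u = u'.
Proof.
  intro H.
  assert (e := fun k => f_equal (fun f => f k) H). cbn beta in e.
  pose proof (e (q1 l1)) as a1. pose proof (e (q2 l1)) as a2. pose proof (e (p1 l2 n2)) as a3.
  pose proof (e (p2 l2 n2)) as a4. pose proof (e (p3 l2 n2)) as a5. pose proof (e (p4 l2 n2)) as a6.
  rewrite !E_q1 in a1. rewrite !E_q2 in a2. rewrite !E_p1 in a3. rewrite !E_p2 in a4.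
  rewrite !E_p3 in a5. rewrite !E_p4 in a6.
  destruct u, u'; cbn in *; subst; reflexivity.
Qed.

Section Eq.
Variable F : coord6 -> coord6.
Hypothesis HF : Gamma_equivariant l1 l2 n2 F.

Lemma F_actG u : F (actG u) = actG (F u).
Proof. destruct HF as [HD _]. apply coord_eq. rewrite E_actG.
  apply (HD (1,0,0,-1)%R); [right; right; left; reflexivity | apply E_actG]. Qed.
Lemma F_actT u : F (actT u) = actT (F u).
Proof. destruct HF as [HD _]. apply coord_eq. rewrite E_actT.
  apply (HD (0,1,1,0)%R); [right; right; right; right; left; reflexivity | apply E_actT]. Qed.
Lemma F_actP u : F (actP u) = actP (F u).
Proof. destruct HF as [HD _]. apply coord_eq. rewrite E_actP.
  apply (HD (0,-1,1,0)%R); [right; right; right; right; right; left; reflexivity | apply E_actP]. Qed.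
Lemma F_actN u : F (actN u) = actN (F u).
Proof. destruct HF as [HD _]. apply coord_eq. rewrite E_actN.
  apply (HD (-1,0,0,-1)%R); [right; right; right; left; reflexivity | apply E_actN]. Qed.

Hypothesis Hdv : ~ (Z.of_nat L | 2 * Z.of_nat l * Z.of_nat n)%Z.

Lemma w1_zero u : cw1 u = 0%C -> cw4 u = 0%C -> cw1 (F u) = 0%C.
Proof.
  intros h1 h4. destruct HF as [_ HT].
  pose proof (HT ts tt u u (eq_sym (trans_fix u h1 h4))) as H.
  apply (f_equal (fun f => f (p1 l2 n2))) in H. unfold trans_act in H. rewrite !E_p1 in H.
  replace (- (ts * fst (p1 l2 n2) + tt * snd (p1 l2 n2))) with (- (2 * PI * (2 * INR l * INR n / INR L))) in H.
  2:{ destruct realfacts as (r1&r2&r3&r4&r5&r6). unfold ts, tt, p1; cbn [fst snd].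
      rewrite r1, r2, r3. field. split; lra. }
  apply (Cexpi_fix _ _ (eq_sym H)). apply cos_not1; [|exact Hdv].
  destruct realfacts as (r1&r2&r3&r4&r5&r6). apply INR_lt. simpl. lra.
Qed.

Lemma cz1G u : cz1 (F u) = cz1 (F (actG u)). Proof. rewrite F_actG; reflexivity. Qed.
Lemma cw2G u : cw2 (F u) = cw1 (F (actG u)). Proof. rewrite F_actG; reflexivity. Qed.
Lemma cw3T u : cw3 (F u) = cw1 (F (actT u)). Proof. rewrite F_actT; reflexivity. Qed.
Lemma cz2T u : cz2 (F u) = cz1 (F (actT u)). Proof. rewrite F_actT; reflexivity. Qed.
Lemma cw4P u : cw4 (F u) = cw1 (F (actP u)). Proof. rewrite F_actP; reflexivity. Qed.
Lemma conjN u : Cconj (cz1 (F u)) = cz1 (F (actN u)). Proof. rewrite F_actN; reflexivity. Qed.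

Ltac simpA := unfold actG, actT, actP, actN; cbn [cz1 cz2 cw1 cw2 cw3 cw4]; rewrite ?Cconj0, ?Cconj_conj.

Lemma main_core :
  let f := fun v => cz1 (F v) in
  let h := fun v => cw1 (F v) in
  let E := embed l1 l2 n2 in
  let Rphi := orth_act (rotm (phi_angle l2 n2)) in
  ((forall v v' : coord6, E v' = Rphi (E v) -> Rphi (E (F v)) = E (F v')) <->
   (forall z1 z2 w2 w3 : C,
      f (mk6 z1 z2 0 w2 w3 0) = h (mk6 w2 w3 z1 0 0 (Cconj z2)))) /\
  ((forall z1 z2 w2 w3 : C,
      f (mk6 z1 z2 0 w2 w3 0) = h (mk6 w2 w3 z1 0 0 (Cconj z2))) <->
   (forall z1 z2 w1 w4 : C,
      h (mk6 z1 z2 w1 0 0 w4) = f (mk6 w1 (Cconj w4) 0 z1 z2 0))).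
Proof.
  intros f h E Rphi. subst f h E Rphi. cbv beta.
  assert (P2 : (forall z1 z2 w2 w3 : C,
      cz1 (F (mk6 z1 z2 0 w2 w3 0)) = cw1 (F (mk6 w2 w3 z1 0 0 (Cconj z2)))) <->
   (forall z1 z2 w1 w4 : C,
      cw1 (F (mk6 z1 z2 w1 0 0 w4)) = cz1 (F (mk6 w1 (Cconj w4) 0 z1 z2 0)))).
  { split; intros C0 a b c d.
    - rewrite C0, Cconj_conj. reflexivity.
    - rewrite C0, Cconj_conj. reflexivity. }
  split; [|exact P2].
  split.
  - intros H z1 z2 w2 w3.
    assert (HE : embed l1 l2 n2 (mk6 w2 w3 z1 0 0 (Cconj z2)) =
                 orth_act (rotm (phi_angle l2 n2)) (embed l1 l2 n2 (mk6 z1 z2 0 w2 w3 0)))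
      by (apply G1; reflexivity).
    specialize (H _ _ HE). apply (f_equal (fun g => g (p1 l2 n2))) in H.
    unfold orth_act in H.
    change (mapply (mtrans (rotm (phi_angle l2 n2))) (p1 l2 n2)) with (RT (p1 l2 n2)) in H.
    rewrite RT_p1, E_q1, E_p1 in H. exact H.
  - intros C0 v v' Hvv. pose proof (proj1 P2 C0) as C1.
    destruct (G2 v v' Hvv) as (h1 & h4 & ->).
    destruct v as [z1 z2 w1 w2 w3 w4]; cbn in h1, h4; subst w1 w4.
    cbn [cz1 cz2 cw1 cw2 cw3 cw4].
    symmetry. apply G1.
    + apply w1_zero; reflexivity.
    + rewrite cw4P. apply w1_zero; simpA; reflexivity.
    + rewrite cw2G. apply w1_zero; simpA; reflexivity.
    + rewrite cw3T. apply w1_zero; simpA; reflexivity.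
    + rewrite cz1G, cw2G. simpA. symmetry. apply C1.
    + rewrite cz2T, cw3T. simpA. rewrite C1, Cconj_conj. reflexivity.
    + symmetry. apply C0.
    + rewrite cw4P, cz2T, conjN, cz1G. simpA. rewrite C1, Cconj_conj. reflexivity.
Qed.
End Eq.
End Tr.
End S.

Theorem mainTheorem8 (l1 l2 n2 : nat)
  (Hl12 : (l2 < l1)%nat) (Hl2n2 : (n2 < l2)%nat) (Hn2 : (0 < n2)%nat)
  (Hpyth : (l1 * l1 = l2 * l2 + n2 * n2)%nat)
  (F : coord6 -> coord6) (HF : Gamma_equivariant l1 l2 n2 F) :
  let f := fun v => cz1 (F v) in
  let h := fun v => cw1 (F v) in
  let E := embed l1 l2 n2 in
  let Rphi := orth_act (rotm (phi_angle l2 n2)) in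
  ((forall v v' : coord6, E v' = Rphi (E v) -> Rphi (E (F v)) = E (F v')) <->
   (forall z1 z2 w2 w3 : C,
      f (mk6 z1 z2 0 w2 w3 0) = h (mk6 w2 w3 z1 0 0 (Cconj z2)))) /\
  ((forall z1 z2 w2 w3 : C,
      f (mk6 z1 z2 0 w2 w3 0) = h (mk6 w2 w3 z1 0 0 (Cconj z2))) <->
   (forall z1 z2 w1 w4 : C,
      h (mk6 z1 z2 w1 0 0 w4) = f (mk6 w1 (Cconj w4) 0 z1 z2 0))).
Proof.
  destruct (NTZ (Z.of_nat l1) (Z.of_nat l2) (Z.of_nat n2)) as (g & L & l & n & Hg & e1 & e2 & e3 & HP & Hn & Hnl & HlL & Hdv & Hne);
    try lia.
  apply (main_core l1 l2 n2) with (g := Z.to_nat g) (L := Z.to_nat L) (l := Z.to_nat l) (n := Z.to_nat n); try lia.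
  - apply lt_INR; lia.
  - apply lt_INR; lia.
  - apply (lt_INR 0); lia.
  - rewrite <- !mult_INR, <- plus_INR. now rewrite Hpyth.
  - intro E. apply Hne. replace 2 with (INR 2) in E by (simpl; ring).
    rewrite <- mult_INR in E. apply INR_eq in E. lia.
  - exact HF.
  - rewrite !Z2Nat.id by lia. exact Hdv.
Qed.
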